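(* Let $G$ be a complete tiered graph on vertex set $[n]$. Then for every $k\ge0$, $\dim_{\mathbb K}\mathcal C_G^{k}=\dim_{\mathbb K}\mathcal S_G^{k}$, where $\mathcal C_G^k$ and $\mathcal S_G^k$ denote the degree-$k$ homogeneous components of $\mathcal C_G$ and $\mathcal S_G$.
   Context: A complete tiered graph on $[n]$ with surjective tiering $\mathbf t:[n]\to[m]$ has edge set exactly $\{\{i,j\}: i<j,\ \mathbf t(i)<\mathbf t(j)\}$. $\mathbb K$ is a field of characteristic $0$. A subset $H\subseteq E(G)$ is slim if $(V(G),E(G)\setminus H)$ is connected. $\Phi_G$ is the commutative $\mathbb K$-algebra generated by variables $\phi_e$, $e\in E(G)$, subject to $\phi_e^2=0$ for all $e$ and $\prod_{e\in H}\phi_e=0$ for every non-slim $H\subseteq E(G)$. $\mathcal C_G$ is the subalgebra of $\Phi_G$ generated by $X_i=\sum_{e\in E(G)}c_{i,e}\phi_e$ ($i\in[n]$), where $c_{i,e}=1$ if $e=\{i,j\}$ with $i<j$, $c_{i,e}=-1$ if $e=\{i,j\}$ with $i>j$, and $c_{i,e}=0$ otherwise; it is graded by degree in the $X_i$. For $e=\{i,j\}$ with $i<j$ let $z_e=z_i-z_j$ and $Z_H=\prod_{e\in H}z_e$; $\mathcal S_G\subseteq\mathbb K[z_1,\dots,z_n]$ is the span of all $Z_H$ with $H$ slim, graded by polynomial degree. *)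

(* Defs.v *)
From HB Require Import structures.
From mathcomp Require Import all_boot all_order all_algebra.
From mathcomp Require Import mpoly.
Set Implicit Arguments. Unset Strict Implicit. Unset Printing Implicit Defensive.
Import GRing.Theory.
Local Open Scope ring_scope.

(* Vertices are 'I_n (= [n]); a tiering is t : 'I_n -> 'I_m. *)

(* Edge set of the complete tiered graph: pairs (i,j), i<j, t i < t j. *)
Definition tedge (n m : nat) (t : 'I_n -> 'I_m) : pred ('I_n * 'I_n) :=
  [pred e : 'I_n * 'I_n | (e.1 < e.2)%N && (t e.1 < t e.2)%N].

(* Edges are indexed by 'I_(nE t); [edge v] is the edge with index v. *)
Definition nE (n m : nat) (t : 'I_n -> 'I_m) : nat := #|tedge t|.
Definition edge (n m : nat) (t : 'I_n -> 'I_m) (v : 'I_(nE t)) : 'I_n * 'I_n :=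
  enum_val v.

(* H slim: the graph (V, E \ H) is connected. *)
Definition slim (n m : nat) (t : 'I_n -> 'I_m) (H : {set 'I_(nE t)}) : bool :=
  [forall x : 'I_n, forall y : 'I_n,
     connect (fun a b : 'I_n => [exists v, (v \notin H) &&
                 ((edge v == (a, b)) || (edge v == (b, a)))]) x y].

(* Ambient polynomial ring K[phi_e : e in E(G)]. *)
Definition phiMono (K : fieldType) (n m : nat) (t : 'I_n -> 'I_m)
  (H : {set 'I_(nE t)}) : {mpoly K[nE t]} := \prod_(v in H) 'X_v.

(* Generators of the defining ideal of Phi_G. *)
Definition phiGens (K : fieldType) (n m : nat) (t : 'I_n -> 'I_m)
  : seq {mpoly K[nE t]} :=
  [seq ('X_v) ^+ 2 | v <- enum 'I_(nE t)] ++
  [seq phiMono K H | H <- enum [set H : {set 'I_(nE t)} | ~~ slim H]].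

(* Membership in the ideal I with Phi_G = K[phi]/I. *)
Definition inPhiIdeal (K : fieldType) (n m : nat) (t : 'I_n -> 'I_m)
  (p : {mpoly K[nE t]}) : Prop :=
  exists q : 'I_(size (phiGens K t)) -> {mpoly K[nE t]},
    p = \sum_i q i * (phiGens K t)`_i.

Definition cfun (K : fieldType) (n m : nat) (t : 'I_n -> 'I_m)
  (i : 'I_n) (v : 'I_(nE t)) : K :=
  if (edge v).1 == i then 1 else if (edge v).2 == i then -1 else 0.
Definition Xgen (K : fieldType) (n m : nat) (t : 'I_n -> 'I_m) (i : 'I_n)
  : {mpoly K[nE t]} := \sum_v cfun K i v *: 'X_v.

(* Representatives (in K[phi]) of the elements of C_G^k: linear combinations
   of products of k generators X_i. *)
Definition CGk (K : fieldType) (n m : nat) (t : 'I_n -> 'I_m) (k : nat)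
  (p : {mpoly K[nE t]}) : Prop :=
  exists c : {ffun 'I_k -> 'I_n} -> K,
    p = \sum_f c f *: \prod_(j < k) Xgen K t (f j).

Definition zE (K : fieldType) (n m : nat) (t : 'I_n -> 'I_m) (v : 'I_(nE t))
  : {mpoly K[n]} := 'X_((edge v).1) - 'X_((edge v).2).
Definition ZH (K : fieldType) (n m : nat) (t : 'I_n -> 'I_m)
  (H : {set 'I_(nE t)}) : {mpoly K[n]} := \prod_(v in H) zE K v.

Definition SG (K : fieldType) (n m : nat) (t : 'I_n -> 'I_m)
  (p : {mpoly K[n]}) : Prop :=
  exists c : {set 'I_(nE t)} -> K,
    p = \sum_(H : {set 'I_(nE t)} | slim H) c H *: ZH K H.
Definition SGk (K : fieldType) (n m : nat) (t : 'I_n -> 'I_m) (k : nat)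
  (p : {mpoly K[n]}) : Prop :=
  @SG K n m t p /\ p \is k.-homog.

Definition indep_mod (K : fieldType) (V : lmodType K) (I : V -> Prop)
  (d : nat) (w : 'I_d -> V) : Prop :=
  forall c : 'I_d -> K, I (\sum_i c i *: w i) -> forall i, c i = 0.

(* The image of the subspace W in the quotient V / I has dimension d:
   d is the maximal size of a family in W independent modulo I. *)
Definition has_dim_mod (K : fieldType) (V : lmodType K) (W I : V -> Prop)
  (d : nat) : Prop :=
  (exists w : 'I_d -> V, (forall i, W (w i)) /\ indep_mod I w) /\
  (forall w : 'I_d.+1 -> V, (forall i, W (w i)) -> ~ indep_mod I w).

(* Main.v *)
Require Import Defs.
From HB Require Import structures.
From mathcomp Require Import all_boot all_order all_algebra.
From mathcomp Require Import mpoly.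
Set Implicit Arguments. Unset Strict Implicit. Unset Printing Implicit Defensive.
Import GRing.Theory.
Local Open Scope ring_scope.

Lemma mcoeffMX_gen (K : fieldType) (N : nat) (p : {mpoly K[N]}) (m k : 'X_{1..N}) :
  (p * 'X_[m])@_k = if (m <= k)%MM then p@_(k - m) else 0.
Proof.
case: ifP => Hle.
  by rewrite -{1}(submK Hle) addmC mcoeffMX.
rewrite {1}(mpolyE p) mulr_suml raddf_sum /= big1 // => m' _.
rewrite -scalerAl -mpolyXD mcoeffZ mcoeffX.
case: eqP => [He|]; last by rewrite mulr0.
by move: Hle; rewrite -He; rewrite /= lem_addl ?mulr0.
Qed.

Lemma mderivX1 (K : fieldType) (N : nat) (i j : 'I_N) :
  ('X_j : {mpoly K[N]})^`M(i) = (j == i)%:R%:MP.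
Proof.
rewrite mderivX mnm1E; case: eqP => [->|_].
  have -> : (U_(i) - U_(i) = 0)%MM by apply/mnmP => x; rewrite !mnmE subnn.
  by rewrite mpolyX0 scale1r.
by rewrite scale0r.
Qed.

Lemma edge_lt (n m : nat) (t : 'I_n -> 'I_m) (v : 'I_(nE t)) :
  ((edge v).1 < (edge v).2)%N.
Proof. by have := enum_valP v; rewrite /edge unfold_in /= => /andP []. Qed.

Lemma zE_deriv (K : fieldType) (n m : nat) (t : 'I_n -> 'I_m)
  (v : 'I_(nE t)) (i : 'I_n) :
  (zE K v)^`M(i) = (cfun K i v)%:MP.
Proof.
rewrite /zE /cfun mderivB !mderivX1.
have hne : (edge v).1 != (edge v).2 by rewrite neq_ltn edge_lt.
case: eqP => [Ha|_]; first by rewrite -Ha eq_sym (negbTE hne) subr0.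
case: eqP => _; first by rewrite sub0r mpolyCN.
by rewrite subr0.
Qed.

Lemma ZH_deriv (K : fieldType) (n m : nat) (t : 'I_n -> 'I_m) (i : 'I_n)
  (H : {set 'I_(nE t)}) :
  (ZH K H)^`M(i) = \sum_(v in H) cfun K i v *: ZH K (H :\ v).
Proof.
move: {2}#|H| (erefl #|H|) => N; elim: N H => [|N IH] H HN.
  have : #|H| == 0%N by rewrite HN.
  rewrite cards_eq0 => /eqP ->.
  rewrite /ZH big_set0 big_set0.
  by rewrite -[1]mpolyC1 mderivC.
have [x Hx] : exists x, x \in H.
  by apply/set0Pn; rewrite -card_gt0 HN.
rewrite /ZH (big_setD1 x Hx) /= mderivM zE_deriv -/(ZH K (H :\ x)).
rewrite IH; last by rewrite (cardsD1 x H) Hx in HN; case: HN.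
rewrite (big_setD1 x Hx) /= mul_mpolyC; congr (_ + _).
rewrite mulr_sumr; apply: eq_bigr => v Hv.
rewrite -scalerAr; congr (_ *: _).
have Hv' : x \in H :\ v.
  by rewrite !inE eq_sym; move: Hv; rewrite !inE => /andP [-> _].
by rewrite /ZH [in RHS](big_setD1 x Hv') /= setDDl setUC -setDDl.
Qed.

Definition mono (N : nat) (H : {set 'I_N}) : 'X_{1..N} := (\sum_(v in H) U_(v))%MM.

Lemma mono_at (N : nat) (H : {set 'I_N}) x : mono H x = (x \in H).
Proof.
rewrite /mono mnm_sumE; case: (boolP (x \in H)) => Hx.
  rewrite (bigD1 x Hx) /= mnm1E eqxx big1 // => v /andP [_ hv].
  by rewrite mnm1E (negbTE hv).
rewrite big1 // => v Hv; rewrite mnm1E; case: eqP => // E.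
by move: Hx; rewrite -E Hv.
Qed.

Lemma core (K : fieldType) (n m : nat) (t : 'I_n -> 'I_m) (s : seq 'I_n)
  (H : {set 'I_(nE t)}) :
  (\prod_(i <- s) Xgen K t i)@_(mono H) =
  ((ZH K H)^`M[(\sum_(i <- s) U_(i))%MM])@_0.
Proof.
elim: s H => [|i s IH] H.
  rewrite !big_nil mderivm0m mcoeff1.
  case: (set_0Vmem H) => [-> | [x Hx]].
    by rewrite /mono /ZH !big_set0 eqxx mcoeff1 eqxx.
  have -> : (mono H == 0%MM) = false.
    apply/negP => /eqP E; have := mono_at H x; rewrite E Hx mnmE //.
  rewrite /ZH (big_setD1 x Hx) /= rmorphM /= /zE mcoeffB !mcoeffX.
  by rewrite !mnm1_eq0 subr0 mul0r.
rewrite !big_cons mderivmDm mderivmU1m ZH_deriv.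
rewrite raddf_sum /= raddf_sum /=.
rewrite /Xgen mulr_suml raddf_sum /=.
rewrite (bigID (fun v => v \in H)) /= [X in _ + X]big1 ?addr0; last first.
  move=> v Hv; rewrite -scalerAl mcoeffZ; rewrite [X in (X)@_ _]mulrC mcoeffMX_gen ifF ?mulr0 //.
  apply/negP => /mnm_lepP /(_ v); rewrite mono_at mnm1E eqxx (negbTE Hv) //.
apply: eq_bigr => v Hv.
rewrite -scalerAl mcoeffZ; rewrite [X in (X)@_ _]mulrC mcoeffMX_gen ifT; last first.
  apply/mnm_lepP => x; rewrite mono_at mnm1E; case: eqP => [<-|] //.
  by rewrite Hv.
rewrite mderivmZ mcoeffZ -IH; congr (_ * _); congr (_@_ _).
apply/mnmP => x; rewrite mnmBE !mono_at mnm1E in_setD1.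
by case: (v =P x) => [<-|ne]; rewrite ?Hv ?eqxx /= ?subn0 //; rewrite eq_sym; case: eqP => // E; case: ne. 
Qed.

Lemma slim_sub (n m : nat) (t : 'I_n -> 'I_m) (H H' : {set 'I_(nE t)}) :
  H' \subset H -> slim H -> slim H'.
Proof.
move=> Hsub /forallP Hs; apply/forallP => x; apply/forallP => y.
have := forallP (Hs x) y; apply: connect_sub => a b /existsP [v /andP [Hv He]].
apply: connect1; apply/existsP; exists v; rewrite He andbT.
by apply: contra Hv; apply: (subsetP Hsub).
Qed.

Lemma phiMonoE (K : fieldType) (n m : nat) (t : 'I_n -> 'I_m) (H : {set 'I_(nE t)}) :
  phiMono K H = 'X_[mono H].
Proof.
by rewrite /phiMono /mono (big_morph (fun m0 : 'X_{1..nE t} => ('X_[m0] : {mpoly K[nE t]})) (@mpolyXD _ _) (@mpolyX0 _ _)).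
Qed.

Lemma ideal_coef (K : fieldType) (n m : nat) (t : 'I_n -> 'I_m)
  (p : {mpoly K[nE t]}) :
  inPhiIdeal p -> forall H, slim H -> p@_(mono H) = 0.
Proof.
move=> [q ->] H Hs; rewrite raddf_sum /=; apply: big1 => i _.
have : (phiGens K t)`_i \in phiGens K t by apply: mem_nth.
rewrite mem_cat => /orP [] /mapP [x Hx ->].
  rewrite mpolyXn mcoeffMX_gen ifF //.
  apply/negP => /mnm_lepP /(_ x); rewrite mulmnE mnm1E eqxx mono_at.
  by case: (x \in H).
move: Hx; rewrite mem_enum inE => Hx.
rewrite phiMonoE mcoeffMX_gen ifF //.
apply/negP => /mnm_lepP Hle; move/negP: Hx; apply; apply: (slim_sub _ Hs).
apply/subsetP => v Hv; have := Hle v; rewrite !mono_at Hv.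
by case: (v \in H).
Qed.

Lemma ideal_gen (K : fieldType) (n m : nat) (t : 'I_n -> 'I_m)
  (r g : {mpoly K[nE t]}) : g \in phiGens K t -> inPhiIdeal (r * g).
Proof.
move=> Hg.
have Hi : (index g (phiGens K t) < size (phiGens K t))%N by rewrite index_mem.
pose i := Ordinal Hi.
exists (fun j => if j == i then r else 0).
rewrite (bigD1 i) //= eqxx big1 ?addr0; last first.
  by move=> j /negbTE ->; rewrite mul0r.
by rewrite nth_index.
Qed.

Lemma ideal_add (K : fieldType) (n m : nat) (t : 'I_n -> 'I_m)
  (a b : {mpoly K[nE t]}) : inPhiIdeal a -> inPhiIdeal b -> inPhiIdeal (a + b).
Proof.
move=> [qa ->] [qb ->]; exists (fun j => qa j + qb j).
by rewrite -big_split /=; apply: eq_bigr => j _; rewrite mulrDl.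
Qed.

Lemma ideal_scale (K : fieldType) (n m : nat) (t : 'I_n -> 'I_m)
  (c : K) (a : {mpoly K[nE t]}) : inPhiIdeal a -> inPhiIdeal (c *: a).
Proof.
move=> [qa ->]; exists (fun j => c *: qa j).
by rewrite scaler_sumr; apply: eq_bigr => j _; rewrite scalerAl.
Qed.

Lemma ideal_0 (K : fieldType) (n m : nat) (t : 'I_n -> 'I_m) :
  inPhiIdeal (0 : {mpoly K[nE t]}).
Proof. by exists (fun _ => 0); rewrite big1 // => j _; rewrite mul0r. Qed.

Lemma ideal_mono (K : fieldType) (n m : nat) (t : 'I_n -> 'I_m)
  (mm : 'X_{1..nE t}) :
  (forall H, slim H -> mm != mono H) -> inPhiIdeal ('X_[mm] : {mpoly K[nE t]}).
Proof.
move=> Hbad.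
case: (boolP [exists v, (1 < mm v)%N]) => [/existsP [v Hv] | /existsPn Hle].
  have Hsub : (U_(v) *+ 2 <= mm)%MM.
    apply/mnm_lepP => x; rewrite mulmnE mnm1E.
    by case: eqP => [<-|] //; rewrite mul1n.
  rewrite -(submK Hsub) mpolyXD -mpolyXn.
  apply: ideal_gen; rewrite mem_cat; apply/orP; left.
  by apply/mapP; exists v; rewrite ?mem_enum.
pose S := [set v | mm v != 0%N].
have HS : mm = mono S.
  apply/mnmP => x; rewrite mono_at inE; have := Hle x.
  by case: (mm x) => [|[|]].
have nS : ~~ slim S by apply/negP => /Hbad; rewrite HS eqxx.
rewrite HS -phiMonoE -[phiMono K S]mul1r; apply: ideal_gen.
rewrite mem_cat; apply/orP; right; apply/mapP; exists S => //.
by rewrite mem_enum inE.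
Qed.

Lemma ideal_iff (K : fieldType) (n m : nat) (t : 'I_n -> 'I_m)
  (p : {mpoly K[nE t]}) :
  inPhiIdeal p <-> forall H, slim H -> p@_(mono H) = 0.
Proof.
split; first exact: ideal_coef.
move=> Hc; rewrite (mpolyE p) big_seq.
apply: (big_ind (@inPhiIdeal K n m t)); [exact: ideal_0 | exact: ideal_add | ].
move=> mm Hm; apply: ideal_scale; apply: ideal_mono => H Hs.
by apply/eqP => E; move: Hm; rewrite mcoeff_msupp E Hc ?eqxx.
Qed.

Lemma deriv_at0 (K : fieldType) (N : nat) (p : {mpoly K[N]}) (a : 'X_{1..N}) :
  (p^`M[a])@_0 = p@_a *+ (\prod_(i < N) (a i)`!).
Proof.
rewrite mcoeff_mderivm addm0; congr (_ *+ _).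
by apply: eq_bigr => i _; rewrite ffactnn.
Qed.

Lemma zE_homog (K : fieldType) (n m : nat) (t : 'I_n -> 'I_m) (v : 'I_(nE t)) :
  zE K v \is 1.-homog.
Proof.
rewrite /zE; apply: dhomogD.
  by rewrite dhomogX; apply/eqP; apply: mdeg1.
by rewrite dhomogN dhomogX; apply/eqP; apply: mdeg1.
Qed.

Lemma ZH_homog (K : fieldType) (n m : nat) (t : 'I_n -> 'I_m) (H : {set 'I_(nE t)}) :
  ZH K H \is #|H|.-homog.
Proof.
rewrite /ZH -big_enum /= cardE.
elim: (enum H) => [|v r IH]; first by rewrite big_nil dhomog1.
by rewrite big_cons /= -add1n; apply: dhomogM => //; apply: zE_homog.
Qed.

Definition multf (n k : nat) (f : {ffun 'I_k -> 'I_n}) : 'X_{1..n} :=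
  (\sum_(j < k) U_(f j))%MM.

Lemma mdeg_multf (n k : nat) (f : {ffun 'I_k -> 'I_n}) : mdeg (multf f) = k.
Proof.
by rewrite /multf mdeg_sum (eq_bigr (fun _ => 1%N)) ?sum1_card ?card_ord // => j _; rewrite mdeg1.
Qed.

Lemma entry (K : fieldType) (n m : nat) (t : 'I_n -> 'I_m) (k : nat)
  (f : {ffun 'I_k -> 'I_n}) (H : {set 'I_(nE t)}) :
  (\prod_(j < k) Xgen K t (f j))@_(mono H) =
  (ZH K H)@_(multf f) *+ (\prod_(i < n) (multf f i)`!).
Proof.
have := @core K n m t [seq f j | j <- index_enum 'I_k] H.
by rewrite !big_map -deriv_at0 => ->.
Qed.
Lemma dimlemma (K : fieldType) (V : lmodType K) (W I : V -> Prop)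
  (J L : finType) (w : J -> V) (phi : V -> L -> K)
  (HW1 : forall a : J -> K, W (\sum_j a j *: w j))
  (HW2 : forall x, W x -> exists a : J -> K, x = \sum_j a j *: w j)
  (HI : forall a : J -> K, I (\sum_j a j *: w j) <->
        (forall l, phi (\sum_j a j *: w j) l = 0))
  (Hphi : forall (a : J -> K) l,
        phi (\sum_j a j *: w j) l = \sum_j a j * phi (w j) l) :
  has_dim_mod W I
    (\rank (\matrix_(j < #|J|, l < #|L|) phi (w (enum_val j)) (enum_val l))).
Proof.
set A := \matrix_(j < #|J|, l < #|L|) _.
have comb : forall (d : nat) (D : 'M[K]_(d, #|J|)) (c : 'I_d -> K),
    \sum_i c i *: (\sum_j D i (enum_rank j) *: w j) =
    \sum_j (\row_(i < d) c i *m D) 0 (enum_rank j) *: w j.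
  move=> d D c.
  under eq_bigr do rewrite scaler_sumr.
  rewrite exchange_big /=; apply: eq_bigr => j _.
  rewrite !mxE scaler_suml; apply: eq_bigr => i _.
  by rewrite mxE scalerA.
have phic : forall (d : nat) (D : 'M[K]_(d, #|J|)) (c : 'I_d -> K) l,
    phi (\sum_j (\row_(i < d) c i *m D) 0 (enum_rank j) *: w j) (enum_val l)
    = (\row_(i < d) c i *m D *m A) 0 l.
  move=> d D c l; rewrite Hphi mxE.
  rewrite (reindex (fun i : 'I_#|J| => enum_val i)) /=; last first.
    by exists enum_rank => x _; [apply: enum_valK | apply: enum_rankK].
  apply: eq_bigr => j _; rewrite enum_valK !mxE //.
split.
  have /submxP [D HD] : (row_base A <= A)%MS by rewrite eq_row_base.
  exists (fun i => \sum_j D i (enum_rank j) *: w j); split.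
    by move=> i; apply: HW1.
  move=> c; rewrite comb => /HI H0.
  have : \row_i c i *m row_base A = 0.
    apply/rowP => l; rewrite HD mulmxA -phic H0 mxE //.
  move/eqP; rewrite mulmx_free_eq0 ?row_base_free // => /eqP /rowP Hc i.
  by have := Hc i; rewrite !mxE.
move=> w' Hw' Hind.
have Ha : forall i, exists a : {ffun J -> K}, w' i == \sum_j a j *: w j.
  move=> i; have [a Ha] := HW2 _ (Hw' i).
  by exists [ffun j => a j]; rewrite Ha; apply/eqP; apply: eq_bigr => j _; rewrite ffunE.
pose a := fun i => xchoose (Ha i).
have Hai : forall i, w' i = \sum_j a i j *: w j.
  by move=> i; apply/eqP; apply: (xchooseP (Ha i)).
pose Am := \matrix_(i < (\rank A).+1, j < #|J|) a i (enum_val j).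
pose P := Am *m A.
have nfree : ~~ row_free P.
  rewrite /row_free; apply/negP => /eqP HP.
  by have := mxrankM_maxr Am A; rewrite HP ltnn.
rewrite -kermx_eq0 in nfree.
have [i0 Hi0] : exists i0, row i0 (kermx P) != 0.
  apply/existsP; move: nfree; apply: contraR; rewrite negb_exists => /forallP H.
  by apply/eqP/row_matrixP => i; rewrite row0; apply/eqP; move: (H i); rewrite negbK.
set u := row i0 (kermx P) in Hi0.
have Hu : u *m P = 0 by rewrite /u -row_mul mulmx_ker row0.
have Hc : forall l : 'I_#|L|, phi (\sum_j (\row_i u 0 i *m Am) 0 (enum_rank j) *: w j) (enum_val l) = 0.
  move=> l; rewrite (phic _ Am (fun i => u 0 i) l) -mulmxA.
  have -> : \row_i u 0 i = u by apply/rowP => i; rewrite mxE.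
  by rewrite Hu mxE.
have Hsum : \sum_i u 0 i *: w' i = \sum_j (\row_i u 0 i *m Am) 0 (enum_rank j) *: w j.
  rewrite -comb; apply: eq_bigr => i _; rewrite Hai; congr (_ *: _).
  by apply: eq_bigr => j _; rewrite mxE enum_rankK.
have Hz : forall i, u 0 i = 0.
  apply: Hind; rewrite Hsum; apply/(HI (fun j => (\row_i u 0 i *m Am) 0 (enum_rank j))) => l.
  by have := Hc (enum_rank l); rewrite enum_rankK.
move/negP: Hi0; apply; apply/eqP/rowP => i; rewrite Hz mxE //.
Qed.

Lemma multf_surj (n k : nat) (a : 'X_{1..n}) :
  mdeg a = k -> exists f : {ffun 'I_k -> 'I_n}, multf f = a.
Proof.
elim: k a => [|k IH] a Ha.
  exists [ffun j : 'I_0 => widen_ord (leq0n n) j].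
  move/eqP: Ha; rewrite mdeg_eq0 => /eqP ->.
  by rewrite /multf big_ord0.
have [i Hi] : exists i, (0 < a i)%N.
  case: (boolP [exists x, (0 < a x)%N]) => [/existsP //| /existsPn Hn].
  have : a = 0%MM by apply/mnmP => x; have := Hn x; rewrite mnmE lt0n negbK => /eqP.
  by move=> E; move: Ha; rewrite E mdeg0.
have Hle : (U_(i) <= a)%MM.
  by apply/mnm_lepP => x; rewrite mnm1E; case: eqP => [<-|].
have [g Hg] : exists g : {ffun 'I_k -> 'I_n}, multf g = (a - U_(i))%MM.
  apply: IH; move: Ha; rewrite -{1}(submK Hle) mdegD mdeg1 addn1.
  by case.
exists [ffun j => match @unlift k.+1 ord_max j with Some j' => g j' | None => i end].
rewrite /multf big_ord_recr /= ffunE unlift_none.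
rewrite (eq_bigr (fun j => (U_(g j))%MM)); last first.
  move=> j _; rewrite ffunE.
  have -> : widen_ord (leqnSn k) j = lift ord_max j by apply/val_inj; rewrite /= /bump leqNgt ltn_ord.
  by rewrite liftK.
by rewrite -/(multf g) Hg submK.
Qed.

Lemma mcoeff_sumZ (K : fieldType) (N : nat) (I : finType) (P : pred I)
  (a : I -> K) (p : I -> {mpoly K[N]}) (al : 'X_{1..N}) :
  (\sum_(i | P i) a i *: p i)@_al = \sum_(i | P i) a i * (p i)@_al.
Proof. by rewrite raddf_sum; apply: eq_bigr => i _; apply: mcoeffZ. Qed.

Theorem mainTheorem4 (K : fieldType) (hK : [pchar K] =i pred0)
  (n m : nat) (t : 'I_n -> 'I_m) (t_surj : forall j : 'I_m, exists i, t i = j)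
  (k : nat) :
  exists d : nat,
    has_dim_mod (@CGk K n m t k) (@inPhiIdeal K n m t) d /\
    has_dim_mod (@SGk K n m t k) (fun p : {mpoly K[n]} => p = 0) d.
Proof.
pose F := {ffun 'I_k -> 'I_n}.
pose S := {set 'I_(nE t)}.
pose wC := fun f : F => \prod_(j < k) Xgen K t (f j).
pose phiC := fun (p : {mpoly K[nE t]}) (H : S) => if slim H then p@_(mono H) else 0.
pose wS := fun H : S => if slim H && (#|H| == k) then ZH K H else 0.
pose phiS := fun (p : {mpoly K[n]}) (f : F) => p@_(multf f).
pose MC := \matrix_(j < #|F|, l < #|S|) phiC (wC (enum_val j)) (enum_val l).
pose MS := \matrix_(j < #|S|, l < #|F|) phiS (wS (enum_val j)) (enum_val l).
have wS_homog : forall H, wS H \is k.-homog.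
  move=> H; rewrite /wS; case: ifP => [/andP [_ /eqP <-]|_]; last exact: dhomog0.
  exact: ZH_homog.
have sum_homog : forall a : S -> K, \sum_H a H *: wS H \is k.-homog.
  move=> a; apply: (big_ind (fun p => p \is k.-homog)); first exact: dhomog0.
    by move=> x y; apply: dhomogD.
  by move=> H _; apply: dhomogZ.
have Hrank : \rank MC = \rank MS.
  have Hfact : forall f : F, ((\prod_(i < n) (multf f i)`!)%:R : K) != 0.
    move=> f; move/pcharf0P: hK => ->; rewrite -lt0n prodn_gt0 // => i.
    exact: fact_gt0.
  pose D := \row_(j < #|F|) ((\prod_(i < n) (multf (enum_val j) i)`!)%:R : K).
  pose D' := \row_(j < #|F|) (D 0 j)^-1.
  have HT : MC^T = MS *m diag_mx D.
    apply/matrixP => l j; rewrite mul_mx_diag !mxE.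
    rewrite /phiC /phiS /wS /wC.
    case: (boolP (slim (enum_val l))) => Hs /=; last by rewrite mcoeff0 mul0r.
    rewrite entry mulr_natr; case: eqP => [//|Hne].
    rewrite mcoeff0 mul0rn (dhomog_nemf_coeff (ZH_homog K (enum_val l))) ?mul0rn //.
    apply/eqP => E; apply: Hne; rewrite -E; exact: mdeg_multf.
  have Hid : diag_mx D *m diag_mx D' = 1%:M.
    rewrite mulmx_diag; apply/matrixP => i j; rewrite !mxE.
    by case: (i == j); rewrite ?mulr0n ?mulr1n // mulfV // Hfact.
  apply/eqP; rewrite eqn_leq; apply/andP; split.
    by rewrite -mxrank_tr HT; apply: mxrankM_maxl.
  have -> : MS = MS *m diag_mx D *m diag_mx D' by rewrite -mulmxA Hid mulmx1.
  rewrite -HT; apply: leq_trans (mxrankM_maxl _ _) _.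
  by rewrite mxrank_tr.
exists (\rank MC); split.
  apply: (@dimlemma K _ _ _ F S wC phiC).
  - by move=> a; exists a.
  - by move=> x [c ->]; exists c.
  - move=> a; rewrite ideal_iff; split.
      by move=> Hc l; rewrite /phiC; case: ifP => // Hs; apply: Hc.
    by move=> Hc H Hs; have := Hc H; rewrite /phiC Hs.
  - move=> a l; rewrite /phiC; case: ifP => _.
      by rewrite raddf_sum; apply: eq_bigr => f _; apply: mcoeffZ.
    by rewrite big1 // => f _; rewrite mulr0.
rewrite Hrank.
apply: (@dimlemma K _ _ _ S F wS phiS).
- move=> a; split; last exact: sum_homog.
  exists (fun H : S => if #|H| == k then a H else 0).
  rewrite (bigID (fun H : S => slim H)) /= [X in _ + X]big1 ?addr0; last first.
    by move=> H /negbTE Hs; rewrite /wS Hs scaler0.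
  apply: eq_bigr => H Hs; rewrite /wS Hs /=.
  by case: ifP => _; rewrite ?scaler0 ?scale0r.
- move=> x [[c Hx] Hhom]; exists c; apply/mpolyP => al.
  rewrite mcoeff_sumZ; case: (boolP (mdeg al == k)) => Hd; last first.
    rewrite (dhomog_nemf_coeff Hhom Hd) big1 // => H _.
    by rewrite (dhomog_nemf_coeff (wS_homog H) Hd) mulr0.
  rewrite Hx mcoeff_sumZ [RHS](bigID (fun H : S => slim H)) /= [X in _ = _ + X]big1 ?addr0; last first.
    by move=> H /negbTE Hs; rewrite /wS Hs mcoeff0 mulr0.
  apply: eq_bigr => H Hs; rewrite /wS Hs /=; case: eqP => // Hne.
  rewrite mcoeff0 (dhomog_nemf_coeff (ZH_homog K H)) //.
  by apply/eqP => E; apply: Hne; rewrite -E; apply/eqP.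
- move=> a; split => [-> f|Hc]; first by rewrite /phiS mcoeff0.
  apply/mpolyP => al; rewrite mcoeff0; case: (boolP (mdeg al == k)) => Hd.
    by have [f Hf] := multf_surj (eqP Hd); rewrite -Hf; apply: Hc.
  exact: dhomog_nemf_coeff (sum_homog a) Hd.
- by move=> a l; rewrite /phiS raddf_sum; apply: eq_bigr => f _; apply: mcoeffZ.
Qed.
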